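(* Consider a multi-threaded program in the ActiveMonitor execution model described in the context, in which every execution satisfies Rules 1 and 2 below (Rule 3 of forcing completion across different monitors is not assumed). Then every such execution is linearizable, where the invocation of a monitor operation is interpreted as the submission of its corresponding task and its response is interpreted as the completion of that task, and where the per-thread order is the thread order $<$ defined in the context. That is, there exists a legal sequential history of all operations, consistent with the order in which the monitor threads execute the tasks, that respects the thread order $<$ of every worker thread (taking as the linearization point of each operation the instant at which the monitor thread finishes executing the corresponding task). Rule 1 (Mutex invariant): all tasks of a single monitor object are executed by the same monitor thread. Rule 2: for any two tasks $s,t$ submitted to the same monitor $M$ with $proc(s)=proc(t)$, if $sub(s)<sub(t)$ then $exe(s)<exe(t)$.
   Context: Execution model (ActiveMonitor). A monitor object encapsulates shared data; each monitor object is executed by a monitor thread. Worker threads (threads created by the user program) never execute monitor methods directly: each invocation of a monitor method by a worker thread is replaced by the submission of an equivalent monitor task to the monitor thread, which executes it. A monitor task $t$ consists of a boolean precondition $P$ and a set of statements $\mathcal{S}$; $t$ is executable when $P$ holds, and then the statements of $\mathcal{S}$ may be executed to complete $t$. Each task is either blocking or non-blocking. If a worker thread submits a blocking task, it cannot execute its next instruction (in particular cannot submit another task) until the task has been completed. If it submits a non-blocking task, it continues immediately, while the task is executed by the monitor thread; if the worker thread later needs the result of a non-blocking task, it blocks until that task is completed. Notation: $proc(t)$ is the worker thread that submits task $t$; $sub(t)$ is the time at which $t$ is submitted to its monitor; $exe(t)$ is the time at which the monitor thread starts executing $t$. Thread order: let $s_1, s_2, \dots, s_m$ be the operations (tasks)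 issued by one worker thread, in the order in which the thread issues them. The thread order $<$ on them is the (transitive closure of the) relation given by: if $s_i$ is blocking then $s_i < s_j$ for all $j>i$; if $s_i$ and $s_j$ are operations on the same monitor object and $i<j$ then $s_i<s_j$; if $s_i$ is non-blocking and its result is required before $s_k$ is issued, then $s_i<s_j$ for all $j\ge k$. *)

(* Defs.v *)
From mathcomp Require Import all_boot.
From Stdlib Require Export Relations.Relation_Operators.
Set Implicit Arguments. Unset Strict Implicit. Unset Printing Implicit Defensive.

(* An execution consists of a finite set of tasks T (one per monitor-operation
   invocation).  For a task t:
     mon t      : the monitor object the task is submitted to;
     proc t     : the worker thread that submits it  (proc(t));
     idx t      : its position in the issue order of proc t (s_1, s_2, ...);
     blocking t : whether the task is blocking;
     req s k    : s is non-blocking and its result is required (by proc s)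
                  before k is issued;
     sub t      : submission time (invocation);
     exe t      : time the monitor thread starts executing t;
     cmp t      : time the monitor thread finishes executing t (response).   *)

Definition thread_step (T M P : Type) (mon : T -> M) (proc : T -> P)
  (idx : T -> nat) (blocking : T -> bool) (req : T -> T -> bool) (s t : T) : Prop :=
  proc s = proc t /\ idx s < idx t /\
  (blocking s \/ mon s = mon t \/
   exists k, proc k = proc s /\ req s k /\ idx k <= idx t).

Definition thread_order (T M P : Type) (mon : T -> M) (proc : T -> P)
  (idx : T -> nat) (blocking : T -> bool) (req : T -> T -> bool) : T -> T -> Prop :=
  clos_trans T (thread_step mon proc idx blocking req).

Definition before (T : eqType) (lin : seq T) (s t : T) : bool :=
  index s lin < index t lin.

(* Main.v *)
Require Import Defs.
From mathcomp Require Import all_boot.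


Lemma sorted_cmp_le (T : finType) (cmp : T -> nat) :
  let lin := sort (fun x y => cmp x <= cmp y) (enum T) in
  forall s t, index s lin <= index t lin -> cmp s <= cmp t.
Proof.
move=> lin s t Hst.
have Hmem : forall x, x \in lin by move=> x; rewrite mem_sort mem_enum.
have Hs : sorted (fun x y => cmp x <= cmp y) lin.
  by apply: sort_sorted => x y; exact: leq_total.
have := @sorted_leq_nth _ (fun x y => cmp x <= cmp y) _ _ s lin Hs (index s lin) (index t lin).
rewrite !inE !index_mem !Hmem !nth_index //; apply => //.
- by move=> a b c /= H1 H2; exact: leq_trans H1 H2.
Qed.

Theorem lemma2 (T : finType) (M P MT : Type)
  (mon : T -> M) (proc : T -> P) (idx : T -> nat)
  (blocking : T -> bool) (req : T -> T -> bool)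
  (exec_by : T -> MT)
  (sub exe cmp : T -> nat)
  (* issue order of each worker thread is a strict order on its tasks *)
  (H_idx_inj : forall s t, proc s = proc t -> idx s = idx t -> s = t)
  (* tasks are submitted in issue order *)
  (H_issue : forall s t, proc s = proc t -> idx s < idx t -> sub s < sub t)
  (* a task is executed after its submission, and execution takes time *)
  (H_sub_exe : forall t, sub t <= exe t)
  (H_exe_cmp : forall t, exe t < cmp t)
  (* a monitor thread executes one task at a time *)
  (H_seq : forall s t, s != t -> exec_by s = exec_by t ->
             cmp s <= exe t \/ cmp t <= exe s)
  (* blocking: the worker cannot submit its next task before completion *)
  (H_block : forall s t, blocking s -> proc s = proc t -> idx s < idx t ->
               cmp s <= sub t)
  (* required results of non-blocking tasks: the worker waits for them *)
  (H_req : forall s k, req s k ->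
             [/\ ~~ blocking s, proc k = proc s, idx s < idx k & cmp s <= sub k])
  (* Rule 1 (mutex invariant) *)
  (Rule1 : forall s t, mon s = mon t -> exec_by s = exec_by t)
  (* Rule 2 *)
  (Rule2 : forall s t, mon s = mon t -> proc s = proc t -> sub s < sub t ->
             exe s < exe t) :
  exists lin : seq T,
    [/\ perm_eq lin (enum T),
        (* linearization point = completion of the task *)
        (forall s t, before lin s t -> cmp s <= cmp t),
        (* legal: each monitor's subhistory is its execution order *)
        (forall s t, s != t -> mon s = mon t ->
           before lin s t = (exe s < exe t))
      & (* respects the thread order < *)
        (forall s t, thread_order mon proc idx blocking req s t ->
           before lin s t)].
Proof.
set lin := sort (fun x y => cmp x <= cmp y) (enum T).
have A := @sorted_cmp_le T cmp.
have B : forall s t, cmp s < cmp t -> before lin s t.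
  move=> s t H; rewrite /before ltnNge; apply/negP => /A H'.
  by move: (leq_trans H H'); rewrite ltnn.
have step : forall s t, thread_step mon proc idx blocking req s t -> cmp s < cmp t.
  move=> s t [Hp [Hi [Hb | [Hm | [k [Hk [Hr Hkt]]]]]]].
  - exact: leq_ltn_trans (leq_trans (H_block s t Hb Hp Hi) (H_sub_exe t)) (H_exe_cmp t).
  - have He := Rule2 s t Hm Hp (H_issue s t Hp Hi).
    have Hne : s != t by apply/eqP => E; move: Hi; rewrite E ltnn.
    case: (H_seq s t Hne (Rule1 s t Hm)) => H.
    + exact: leq_ltn_trans H (H_exe_cmp t).
    + have := leq_ltn_trans H (ltn_trans He (H_exe_cmp t)); by rewrite ltnn.
  - case: (H_req s k Hr) => _ Hks _ Hc.
    have Hkt' : sub k <= sub t.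
      move: Hkt; rewrite leq_eqVlt => /orP [/eqP E|L].
      + by rewrite (H_idx_inj k t (etrans Hks Hp) E).
      + exact: ltnW (H_issue k t (etrans Hks Hp) L).
    exact: leq_ltn_trans (leq_trans Hc (leq_trans Hkt' (H_sub_exe t))) (H_exe_cmp t).
exists lin; split.
- by rewrite perm_sort.
- by move=> s t /ltnW /A.
- move=> s t Hne Hm.
  case: (H_seq s t Hne (Rule1 s t Hm)) => H.
  + have H1 : exe s < exe t := leq_trans (H_exe_cmp s) H.
    by rewrite H1; apply: B; exact: leq_ltn_trans H (H_exe_cmp t).
  + have H1 : exe t < exe s := leq_trans (H_exe_cmp t) H.
    have Hb := B t s (leq_ltn_trans H (H_exe_cmp s)).
    rewrite /before in Hb *; rewrite ltnNge (ltnW Hb) ltnNge (ltnW H1) //.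
- move=> s t Hst; apply: B; elim: Hst => [x y /step //|x y z _ H1 _ H2].
  exact: ltn_trans H1 H2.
Qed.
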